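(* Let $G$ be a finite connected graph with chromatic number $\chi$, let $c$ be a nice $\chi$-coloring of $G$, and let $(V^c_1,\dots,V^c_k)$ be the level partition of $D_c$. Let $B_c$ be the set of vertices $x$ of $G$ such that there is no colorful path (with respect to $c$) starting at $x$. Then $B_c\subseteq V^c_2\cup V^c_3\cup\dots\cup V^c_{\chi-1}$.
   Context: A proper $\chi$-coloring is a map $c:V(G)\to\{1,\dots,\chi\}$ with adjacent vertices receiving different colors; colors are considered modulo $\chi$. A colorful path is a path on $\chi$ distinct vertices of $G$ whose colors are pairwise distinct. $D_c$ is the oriented graph on $V(G)$ with an arc $ab$ if and only if $\{a,b\}\in E(G)$ and $c(b)\equiv c(a)+1\pmod{\chi}$. The coloring $c$ is nice if $D_c$ is acyclic and has exactly one sink (vertex of out-degree $0$). For an acyclic oriented graph $D$, the level partition is the unique partition $(V_1,\dots,V_k)$ of $V(D)$ such that $V_i$ is the set of sinks of the subdigraph of $D$ induced on $V(D)\setminus(V_1\cup\dots\cup V_{i-1})$. *)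

(* Defs.v *)
From mathcomp Require Import all_boot.
Set Implicit Arguments. Unset Strict Implicit. Unset Printing Implicit Defensive.

Definition simple_graph (T : finType) (e : rel T) : Prop :=
  symmetric e /\ irreflexive e.

Definition connected_graph (T : finType) (e : rel T) : Prop :=
  forall x y : T, connect e x y.

(* Proper k-colouring; colours are 0..k-1 (representatives mod k). *)
Definition proper_coloring (T : finType) (e : rel T) (k : nat) (c : T -> nat) : Prop :=
  (forall x, c x < k) /\ (forall x y, e x y -> c x != c y).

Definition chromatic_number (T : finType) (e : rel T) (chi : nat) : Prop :=
  (exists c, proper_coloring e chi c) /\
  (forall k, k < chi -> forall c, ~ proper_coloring e k c).

Definition Dc (T : finType) (e : rel T) (chi : nat) (c : T -> nat) : rel T :=
  fun a b => e a b && (c b %% chi == (c a).+1 %% chi).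

Definition is_sink (T : finType) (D : rel T) (x : T) : bool :=
  [forall y, ~~ D x y].

Definition acyclic (T : finType) (D : rel T) : Prop :=
  forall x y, D x y -> ~~ connect D y x.

Definition nice (T : finType) (e : rel T) (chi : nat) (c : T -> nat) : Prop :=
  acyclic (Dc e chi c) /\ #|[set x | is_sink (Dc e chi c) x]| = 1.

(* Level partition: upto n = V_1 ∪ ... ∪ V_n, where V_{n+1} is the set of
   sinks of D restricted to the vertices outside upto n. *)
Fixpoint levels_upto (T : finType) (D : rel T) (n : nat) : {set T} :=
  match n with
  | 0 => set0
  | n'.+1 =>
      let U := levels_upto D n' in
      U :|: [set x | (x \notin U) && [forall y, (y \notin U) ==> ~~ D x y]]
  end.

Definition level (T : finType) (D : rel T) (i : nat) : {set T} :=
  levels_upto D i :\: levels_upto D i.-1.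

Definition colorful_path_from (T : finType) (e : rel T) (chi : nat)
    (c : T -> nat) (x : T) (p : seq T) : Prop :=
  [/\ size (x :: p) = chi, path e x p, uniq (x :: p) & uniq (map c (x :: p))].

Definition in_Bc (T : finType) (e : rel T) (chi : nat) (c : T -> nat) (x : T) : Prop :=
  ~ exists p : seq T, colorful_path_from e chi c x p.

(* Main.v *)
Require Import Defs.
From mathcomp Require Import all_boot.
From mathcomp Require Import zify.
Set Implicit Arguments. Unset Strict Implicit. Unset Printing Implicit Defensive.

Section Aux.
Variable T : finType.
Implicit Types (D : rel T).

Lemma upto_mono D m n : m <= n -> levels_upto D m \subset levels_upto D n.
Proof.
move/subnK <-; elim: (n - m) => [|k IH] //=.
apply: subset_trans IH _; exact: subsetUl.
Qed.

Lemma upto0 D x : x \in levels_upto D 0 = false.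
Proof. by rewrite /= in_set0. Qed.

Lemma out_lower D i x y : x \in levels_upto D i.+1 -> D x y -> y \in levels_upto D i.
Proof.
elim: i x y => [|i IH] x y.
  rewrite /= set0U inE => /andP[_ /forallP H] Dxy.
  by have := H y; rewrite in_set0 Dxy.
rewrite [levels_upto D i.+2]/= inE => /orP[Hx|]; first by move=> Dxy; rewrite /= inE (IH _ _ Hx Dxy).
rewrite inE => /andP[_ /forallP H] Dxy.
case: (boolP (y \in levels_upto D i.+1)) => // Hy.
by have := H y; rewrite Hy Dxy.
Qed.

Lemma descend D i x : 2 <= i -> x \in level D i ->
  exists y, D x y /\ y \in level D i.-1.
Proof.
case: i => [|[|j]] // _; rewrite /level inE => /andP[Hn].
rewrite [levels_upto D j.+2]/= inE (negbTE Hn) /= inE => /andP[_ /forallP H].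
move: Hn; rewrite [levels_upto D j.+1]/= inE negb_or inE negb_and => /andP[Hnj].
rewrite Hnj /= => /forallPn [y]; rewrite negb_imply negbK => /andP[Hy Dxy].
exists y; split => //=.
rewrite /level /= inE Hy /=.
case: (boolP (y \in levels_upto D j.+1)) => // Hy'.
by have := H y; rewrite Hy' Dxy.
Qed.

Lemma path_level D n : forall x i, x \in level D i -> n < i ->
  exists p, [/\ size p = n, path D x p & last x p \in level D (i - n)].
Proof.
elim: n => [|n IH] x i Hx Hn.
  by exists [::]; rewrite subn0.
have H2 : 2 <= i by lia.
have [y [Dxy Hy]] := descend H2 Hx.
have Hn' : n < i.-1 by lia.
have [p [Hs Hp Hl]] := IH y _ Hy Hn'.
exists (y :: p); split => //=; first by rewrite Hs.
  by rewrite Dxy.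
have -> : i - n.+1 = i.-1 - n by lia.
exact: Hl.
Qed.

Lemma level1_sink D x : x \in level D 1 -> is_sink D x.
Proof.
rewrite /level inE => /andP[_]; rewrite /= set0U inE => /andP[_ /forallP H].
by apply/forallP => y; have := H y; rewrite in_set0.
Qed.

Lemma all_in_upto D : acyclic D -> forall x, x \in levels_upto D #|T|.
Proof.
move=> Hac.
suff H : forall n x, #|[set y | connect D x y]| <= n -> x \in levels_upto D n.
  by move=> x; apply: H; apply: max_card.
elim=> [|n IH] x Hc.
  have Hx : x \in [set y | connect D x y] by rewrite inE connect0.
  have : 0 < #|[set y | connect D x y]| by apply/card_gt0P; exists x.
  lia.
rewrite /= inE.
case: (boolP (x \in levels_upto D n)) => //= Hx.
rewrite inE Hx /=; apply/forallP => y; apply/implyP => Hy; apply/negP => Dxy.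
move/negP: Hy; apply; apply: IH.
have Hpr : [set z | connect D y z] \proper [set z | connect D x z].
  apply/properP; split.
    apply/subsetP => z; rewrite !inE => Hz.
    exact: connect_trans (connect1 Dxy) Hz.
  exists x; rewrite !inE ?connect0 //.
  exact: Hac Dxy.
have := proper_card Hpr; lia.
Qed.

Lemma upto_size D u p j : path D u p -> u \in levels_upto D j -> size p < j.
Proof.
elim: p u j => [|y p IH] u [|j] //=.
- by rewrite in_set0.
- by rewrite in_set0.
move=> /andP[Duy Hp] Hu.
have := IH y j Hp (out_lower Hu Duy); lia.
Qed.

Lemma acyc_uniq D x p : acyclic D -> path D x p -> uniq (x :: p).
Proof.
move=> Hac; elim: p x => [|y p IH] x //= /andP[Dxy Hp].
have U := IH y Hp; rewrite /= in U; rewrite U andbT; apply/negP => Hin.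
have := path_connect Hp Hin.
by move: (Hac _ _ Dxy) => /negP.
Qed.

Lemma has_level D x : acyclic D -> exists i, 1 <= i /\ x \in level D i.
Proof.
move=> Hac.
have exP : exists n, x \in levels_upto D n by exists #|T|; exact: all_in_upto.
case: (ex_minnP exP) => i Hi Hmin.
exists i; case: i Hi Hmin => [|i] Hi Hmin; first by rewrite in_set0 in Hi.
split => //; rewrite /level inE Hi andbT /=.
apply/negP => H; have := Hmin _ H; lia.
Qed.

Variables (e : rel T) (chi : nat) (c : T -> nat).

Lemma Dpath_col_gen a x p m : (forall v, c v < chi) -> path (Dc e chi c) x p ->
  c x = (a + m) %% chi ->
  map c (x :: p) = map (fun k => (a + k) %% chi) (iota m (size p).+1).
Proof.
move=> Hc; elim: p x m => [|y p IH] x m /=; first by move=> _ ->.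
move=> /andP[/andP[_ Hy] Hp] Hx.
have := IH y m.+1 Hp; rewrite /= => -> //.
  by rewrite Hx.
rewrite -(modn_small (Hc y)) (eqP Hy) Hx addnS -[(_ + m).+1]addn1 -[((_ + m) %% chi).+1]addn1.
by rewrite modnDml.
Qed.

Lemma Dpath_col x p : (forall v, c v < chi) -> path (Dc e chi c) x p ->
  map c (x :: p) = map (fun k => (c x + k) %% chi) (iota 0 (size p).+1).
Proof.
move=> Hc Hp; apply: Dpath_col_gen => //; by rewrite addn0 modn_small.
Qed.

Lemma uniq_mod a n : n <= chi -> uniq (map (fun k => (a + k) %% chi) (iota 0 n)).
Proof.
move=> Hn; rewrite map_inj_in_uniq ?iota_uniq // => k1 k2.
rewrite !mem_iota /= => h1 h2 /eqP; rewrite eqn_modDl => /eqP.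
by rewrite !modn_small //; lia.
Qed.

Lemma Dpath_colorful x p : (forall v, c v < chi) -> acyclic (Dc e chi c) ->
  path (Dc e chi c) x p -> size p = chi.-1 -> 0 < chi ->
  colorful_path_from e chi c x p.
Proof.
move=> Hc Hac Hp Hs H0; split.
- by rewrite /= Hs prednK.
- by apply: sub_path Hp => a b /andP[].
- exact: (acyc_uniq Hac Hp).
- rewrite Dpath_col // uniq_mod //; lia.
Qed.

Lemma Dpath_colorful_rev x p : (forall v, c v < chi) -> acyclic (Dc e chi c) ->
  symmetric e ->
  path (Dc e chi c) x p -> size p = chi.-1 -> 0 < chi ->
  colorful_path_from e chi c (last x p) (rev (belast x p)).
Proof.
move=> Hc Hac Hsym Hp Hs H0.
have [h1 h2 h3 h4] := Dpath_colorful Hc Hac Hp Hs H0.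
have E : last x p :: rev (belast x p) = rev (x :: p) by rewrite [x :: p]lastI rev_rcons.
split.
- by rewrite E size_rev.
- rewrite rev_path; apply: sub_path h2 => a b /=; by rewrite Hsym.
- by rewrite E rev_uniq.
- by rewrite E map_rev rev_uniq.
Qed.

Lemma Rpath_last (R : rel T) u p : (forall a b, R a b -> c b = (c a).+1) ->
  path R u p -> c (last u p) = c u + size p.
Proof.
move=> HR; elim: p u => [|y p IH] u /=; first by rewrite addn0.
move=> /andP[Ruy Hp]; rewrite (IH y Hp) (HR _ _ Ruy); lia.
Qed.

Lemma long_path : simple_graph e -> chromatic_number e chi ->
  proper_coloring e chi c -> 0 < chi ->
  exists u p, path (Dc e chi c) u p /\ size p = chi.-1.
Proof.
move=> [Hsym Hirr] [_ Hmin] [Hlt Hpr] H0.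
pose R := fun a b => e a b && (c b == (c a).+1).
pose S := [set v | [exists u, (c u == 0) && connect R u v]].
have HS : forall a b, a \in S -> R a b -> b \in S.
  move=> a b; rewrite !inE => /existsP[u /andP[Hu Hc]] Rab.
  apply/existsP; exists u; rewrite Hu /=; exact: connect_trans Hc (connect1 Rab).
case: (boolP [exists v, (v \in S) && (c v == chi.-1)]) => [/existsP[v /andP[Hv /eqP Hcv]]|Hno].
  move: Hv; rewrite inE => /existsP[u /andP[/eqP Hu /connectP[p Hp Hl]]].
  exists u, p; split.
    apply: sub_path Hp => a b; rewrite /R => /andP[Eab /eqP Hb]; by rewrite /Dc Eab Hb /= eqxx.
  have HR : forall a b, R a b -> c b = (c a).+1 by move=> a b; rewrite /R => /andP[_ /eqP].
  by have := Rpath_last HR Hp; rewrite -Hl Hcv Hu add0n => ->.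
exfalso.
pose c'' := fun v => c v + (v \in S) - 1.
have Hcol0 : forall v, c v = 0 -> v \in S.
  by move=> v Hv; rewrite inE; apply/existsP; exists v; rewrite Hv connect0.
have Hnot : forall v, v \in S -> c v != chi.-1.
  by move=> v Hv; apply/negP => Hc; move/existsP: Hno; apply; exists v; rewrite Hv.
apply: (Hmin chi.-1 _ c''); first lia.
split.
  move=> v; rewrite /c''; have := Hlt v.
  case: (boolP (v \in S)) => Hv /=.
    have := Hnot v Hv; move=> /eqP; lia.
  case: (c v =P 0) => [/Hcol0|]; [by rewrite (negbTE Hv)|lia].
move=> x y Exy; rewrite /c''.
have := Hpr x y Exy.
have Eyx : e y x by rewrite Hsym.
case: (boolP (x \in S)) => Hx; case: (boolP (y \in S)) => Hy /= /eqP Hne; apply/eqP => Heq.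
- lia.
- have Hx0 : c x + 1 = c y.
    case: (c y =P 0) => [/Hcol0|]; [by rewrite (negbTE Hy)|lia].
  have : y \in S by apply: HS Hx _; rewrite /R Exy -Hx0 addn1 eqxx.
  by rewrite (negbTE Hy).
- have Hx0 : c y + 1 = c x.
    case: (c x =P 0) => [/Hcol0|]; [by rewrite (negbTE Hx)|lia].
  have : x \in S by apply: HS Hy _; rewrite /R Eyx -Hx0 addn1 eqxx.
  by rewrite (negbTE Hx).
- case: (c x =P 0) => [/Hcol0|]; [by rewrite (negbTE Hx)|].
  case: (c y =P 0) => [/Hcol0|]; [by rewrite (negbTE Hy)|lia].
Qed.

End Aux.

Theorem lemma7 (T : finType) (e : rel T) (chi : nat) (c : T -> nat) :
  simple_graph e -> connected_graph e -> chromatic_number e chi ->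
  proper_coloring e chi c -> nice e chi c ->
  forall x : T, in_Bc e chi c x ->
    x \in \bigcup_(2 <= i < chi) level (Dc e chi c) i.
Proof.
move=> Hs _ Hchi Hc [Hac Hsink] x HB.
have [Hlt Hpr] := Hc.
have H0 : 0 < chi by have := Hlt x; lia.
set D := Dc e chi c in Hac Hsink *.
have [i [Hi1 Hxi]] := has_level x Hac.
case: (leqP chi i) => Hci.
  have Hn : chi.-1 < i by lia.
  have [p [Hsz Hp _]] := path_level Hxi Hn.
  by case: HB; exists p; apply: Dpath_colorful.
case: (i =P 1) => [Ei|Ni].
  exfalso.
  have [u [p [Hp Hsz]]] := long_path Hs Hchi Hc H0.
  have [j [Hj1 Huj]] := has_level u Hac.
  have Hjc : chi <= j.
    move: (Huj); rewrite /level inE => /andP[_ H].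
    have := upto_size Hp H; rewrite Hsz; lia.
  have Hjj : j - chi < j by lia.
  have [q [_ _ Hw]] := path_level (n := j - chi) Huj Hjj.
  have Ejc : j - (j - chi) = chi by lia.
  rewrite Ejc in Hw.
  have Hcc : chi.-1 < chi by lia.
  have [p' [Hsz' Hp' Hl]] := path_level (n := chi.-1) Hw Hcc.
  have Ec : chi - chi.-1 = 1 by lia.
  rewrite Ec in Hl.
  have Hs1 := level1_sink Hl.
  rewrite Ei in Hxi; have Hs2 := level1_sink Hxi.
  have [a Ha] := cards1P (introT eqP Hsink).
  have : last (last u q) p' = x.
    have h1 : last (last u q) p' \in [set x | is_sink D x] by rewrite inE.
    have h2 : x \in [set x | is_sink D x] by rewrite inE.
    by rewrite Ha !inE in h1 h2; rewrite (eqP h1) (eqP h2).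
  move=> Ex; apply: HB; rewrite -Ex.
  exists (rev (belast (last u q) p')).
  by apply: Dpath_colorful_rev => //; case: Hs.
rewrite (bigD1_seq i) /= ?mem_index_iota ?iota_uniq //; last lia.
by rewrite inE Hxi.
Qed.
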